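(* Let $p=(p_i)_{i\in\mathbb{N}}$ be a cookie environment with $p_i\in[\frac12,1)$ for all $i$, and suppose $\delta=\sum_{i=1}^\infty(2p_i-1)<\infty$. Let $\nu(x)=\frac1x\mathbb{E}[(U_p(x)-x)^2]$. Then $\nu(x)\to2$ as $x\to\infty$, and there is a constant $C$ depending only on $p$ such that $|\nu(x)-2|\le C\log^4(x)/\sqrt x$ for all sufficiently large $x$.
   Context: For a cookie environment $p$, let $B_1,B_2,\dots$ be independent Bernoulli random variables with $\Pr[B_i=1]=p_i$ ($B_i=1$ is a ''success'', $B_i=0$ a ''failure''). For a positive integer $x$, $U_p(x)=\inf\{k\in\mathbb{N}:\sum_{i=1}^k(1-B_i)=x\}-x$, i.e. the number of successes before the $x$-th failure. *)

(* Defs.v *)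
From HB Require Import structures.
From mathcomp Require Import all_boot all_order all_algebra.
From mathcomp Require Import all_classical all_reals all_analysis.
Set Implicit Arguments. Unset Strict Implicit. Unset Printing Implicit Defensive.
Import Order.TTheory GRing.Theory Num.Theory.
Local Open Scope classical_set_scope.
Local Open Scope ring_scope.

(* Indices are shifted: the paper's B_1, B_2, ... are B 0, B 1, ...;
   likewise p_1, p_2, ... are p 0, p 1, .... *)

Definition nfail (b : nat -> bool) (k : nat) : nat := \sum_(i < k) ~~ b i.

(* U_p(x) for a single outcome sequence: inf{k : nfail k = x} - x,
   or None (= +oo) if the infimum is over the empty set. *)
Definition Uval (b : nat -> bool) (x : nat) : option nat :=
  match pselect (exists k, nfail b k == x) with
  | left H => Some (ex_minn H - x)%N
  | right _ => None
  end.

Definition sqdev {R : realType} (b : nat -> bool) (x : nat) : \bar R :=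
  match Uval b x with
  | Some u => (((u%:R - x%:R) ^+ 2 : R))%:E
  | None => +oo%E
  end.

(* B is a sequence of mutually independent Bernoulli random variables on
   the probability space P with P[B i = true] = p i. *)
Definition cookie_process {d : measure_display} {T : measurableType d}
    {R : realType} (P : probability T R) (p : nat -> R)
    (B : nat -> T -> bool) : Prop :=
  (forall i, measurable [set w | B i w]) /\
  (forall i, P [set w | B i w] = (p i)%:E) /\
  (forall (s : seq nat) (b : nat -> bool), uniq s ->
     P (\bigcap_(i in [set` s]) [set w | B i w = b i])
     = (\prod_(i <- s) P [set w | B i w = b i])%E).

Definition nu {d : measure_display} {T : measurableType d} {R : realType}
    (P : probability T R) (B : nat -> T -> bool) (x : nat) : \bar R :=
  ((x%:R^-1)%:E * \int[P]_w sqdev (fun i => B i w) x)%E.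

(* Main.v *)
Require Import Defs.
From HB Require Import structures.
From mathcomp Require Import all_boot all_order all_algebra.
From mathcomp Require Import all_classical all_reals all_analysis.
From mathcomp Require Import measurable_realfun.
From mathcomp Require Import ring lra zify.
Import Order.TTheory GRing.Theory Num.Theory.
Local Open Scope classical_set_scope.
Local Open Scope ring_scope.

Set Implicit Arguments. Unset Strict Implicit. Unset Printing Implicit Defensive.

Section Fin.
Variable R : realType.
Variable p : nat -> R.

Fixpoint Ex (n : nat) (f : seq bool -> R) : R :=
  if n is n'.+1 then Ex n' (fun s => p n' * f (rcons s true) + (1 - p n') * f (rcons s false))
  else f [::].

Lemma Ex_ext n f g : (forall s, size s = n -> f s = g s) -> Ex n f = Ex n g.
Proof.
elim: n f g => [|n IH] f g H /=; first exact: H.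
by apply: IH => s hs; rewrite !H // size_rcons hs.
Qed.

Lemma ExD n f g : Ex n (fun s => f s + g s) = Ex n f + Ex n g.
Proof.
elim: n f g => [|n IH] f g //=; rewrite -IH; apply: Ex_ext => s _; ring.
Qed.

Lemma ExZ n c f : Ex n (fun s => c * f s) = c * Ex n f.
Proof.
elim: n f => [|n IH] f //=; rewrite -IH; apply: Ex_ext => s _; ring.
Qed.

Lemma Ex_cst n c : Ex n (fun _ => c) = c.
Proof.
elim: n c => [|n IH] c //=; rewrite -[RHS](IH c); apply: Ex_ext => s _; ring.
Qed.

Lemma ExN n f : Ex n (fun s => - f s) = - Ex n f.
Proof. by rewrite -mulN1r -ExZ; apply: Ex_ext => s _; ring. Qed.

Lemma ExB n f g : Ex n (fun s => f s - g s) = Ex n f - Ex n g.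
Proof. by rewrite ExD ExN. Qed.

Hypothesis p01 : forall i, 0 <= p i <= 1.

Lemma Ex_le n f g : (forall s, size s = n -> f s <= g s) -> Ex n f <= Ex n g.
Proof.
elim: n f g => [|n IH] f g H /=; first exact: H.
apply: IH => s hs; have /andP[h0 h1] := p01 n.
have h2 : 0 <= 1 - p n by lra.
apply: lerD; apply: ler_wpM2l => //; apply: H; by rewrite size_rcons hs.
Qed.

Lemma Ex_rcons n f g :
  (forall s b, size s = n -> f (rcons s b) = f s + g s b) ->
  Ex n.+1 f = Ex n f + Ex n (fun s => p n * g s true + (1 - p n) * g s false).
Proof.
move=> H /=; rewrite -ExD; apply: Ex_ext => s hs; rewrite !H //; ring.
Qed.

Lemma Ex_rconsM n f c :
  (forall s b, size s = n -> f (rcons s b) = f s * c b) ->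
  Ex n.+1 f = Ex n f * (p n * c true + (1 - p n) * c false).
Proof.
move=> H /=; rewrite mulrC -ExZ; apply: Ex_ext => s hs; rewrite !H //; ring.
Qed.

End Fin.
Section Walk.
Variable R : realType.
Variable p : nat -> R.
Variable x : nat.

Definition nfi (s : seq bool) (i : nat) : nat := (\sum_(j < i) ~~ nth true s j)%N.
Definition nf s := nfi s (size s).
Definition live s i : R := ((nfi s i < x)%N)%:R.
Definition sg (b : bool) : R := if b then 1 else -1.
Definition dd i : R := 2 * p i - 1.
Definition Sst s := \sum_(i < size s) live s i * sg (nth true s i).
Definition Ast s := \sum_(i < size s) live s i * (sg (nth true s i) - dd i).
Definition Dst s := \sum_(i < size s) live s i * dd i.
Definition Tst s := \sum_(i < size s) live s i.
Definition Fst s := \sum_(i < size s) live s i * (~~ nth true s i)%:R.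

Lemma nfi_rcons s b i : (i <= size s)%N -> nfi (rcons s b) i = nfi s i.
Proof.
move=> hi; apply: eq_bigr => j _; rewrite nth_rcons.
by rewrite (leq_trans (ltn_ord j) hi).
Qed.

Lemma nf_rcons s b : nf (rcons s b) = (nf s + ~~ b)%N.
Proof.
rewrite /nf /nfi size_rcons big_ord_recr /=; congr (_ + _)%N.
  by apply: eq_bigr => j _; rewrite nth_rcons ltn_ord.
by rewrite nth_rcons ltnn eqxx.
Qed.

Lemma sum_rcons (F : seq bool -> nat -> R) s b :
  (forall i, (i < size s)%N -> F (rcons s b) i = F s i) ->
  \sum_(i < size (rcons s b)) F (rcons s b) i =
  \sum_(i < size s) F s i + F (rcons s b) (size s).
Proof.
move=> H; rewrite size_rcons big_ord_recr /=; congr (_ + _).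
by apply: eq_bigr => i _; rewrite H.
Qed.

Lemma live_rcons s b i : (i <= size s)%N -> live (rcons s b) i = live s i.
Proof. by move=> hi; rewrite /live nfi_rcons. Qed.

Lemma nth_rcons_lt s b i : (i < size s)%N -> nth true (rcons s b) i = nth true s i.
Proof. by move=> hi; rewrite nth_rcons hi. Qed.

Lemma nth_rcons_size s b : nth true (rcons s b) (size s) = b.
Proof. by rewrite nth_rcons ltnn eqxx. Qed.

Definition lv s : R := ((nf s < x)%N)%:R.

Lemma live_size s b : live (rcons s b) (size s) = lv s.
Proof. by rewrite live_rcons. Qed.


Lemma Sst_rcons s b : Sst (rcons s b) = Sst s + lv s * sg b.
Proof.
rewrite /Sst (@sum_rcons (fun (t : seq bool) (j : nat) => live t j * sg (nth true t j))) /= ?live_size ?nth_rcons_size //.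
by move=> i hi; rewrite live_rcons ?nth_rcons_lt // ltnW.
Qed.

Lemma Ast_rcons s b : Ast (rcons s b) = Ast s + lv s * (sg b - dd (size s)).
Proof.
rewrite /Ast (@sum_rcons (fun (t : seq bool) (j : nat) => live t j * (sg (nth true t j) - dd j))) /= ?live_size ?nth_rcons_size //.
by move=> i hi; rewrite live_rcons ?nth_rcons_lt // ltnW.
Qed.

Lemma Dst_rcons s b : Dst (rcons s b) = Dst s + lv s * dd (size s).
Proof.
rewrite /Dst (@sum_rcons (fun (t : seq bool) (j : nat) => live t j * dd j)) /= ?live_size ?nth_rcons_size //.
by move=> i hi; rewrite live_rcons ?nth_rcons_lt // ltnW.
Qed.

Lemma Tst_rcons s b : Tst (rcons s b) = Tst s + lv s.
Proof.
rewrite /Tst (@sum_rcons (fun (t : seq bool) (j : nat) => live t j)) /= ?live_size ?nth_rcons_size //.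
by move=> i hi; rewrite live_rcons ?nth_rcons_lt // ltnW.
Qed.

Lemma Fst_rcons s b : Fst (rcons s b) = Fst s + lv s * (~~ b)%:R.
Proof.
rewrite /Fst (@sum_rcons (fun (t : seq bool) (j : nat) => live t j * (~~ nth true t j)%:R)) /= ?live_size ?nth_rcons_size //.
by move=> i hi; rewrite live_rcons ?nth_rcons_lt // ltnW.
Qed.

Lemma SAD s : Sst s = Ast s + Dst s.
Proof.
elim/last_ind: s => [|s b IH]; first by rewrite /Sst /Ast /Dst !big_ord0 addr0.
rewrite Sst_rcons Ast_rcons Dst_rcons IH; ring.
Qed.

Lemma TSF s : Tst s = Sst s + 2 * Fst s.
Proof.
elim/last_ind: s => [|s b IH]; first by rewrite /Sst /Tst /Fst !big_ord0; ring.
rewrite Tst_rcons Sst_rcons Fst_rcons IH; case: b => /=; rewrite /sg; ring.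
Qed.

Lemma Fst_min s : Fst s = (minn (nf s) x)%:R.
Proof.
elim/last_ind: s => [|s b IH].
  by rewrite /Fst big_ord0 /nf /nfi /= big_ord0 min0n.
rewrite Fst_rcons IH nf_rcons /lv; case: b => /=.
  by rewrite mulr0 addr0 addn0.
rewrite mulr1 addn1 -natrD; congr (_%:R).
case: ltnP => h; lia.
Qed.

Lemma Sst_abs s : `|Sst s| <= (size s)%:R.
Proof.
elim/last_ind: s => [|s b IH]; first by rewrite /Sst big_ord0 normr0.
rewrite Sst_rcons size_rcons -addn1 natrD.
apply: (le_trans (ler_normD _ _)); apply: lerD => //.
rewrite /lv /sg; case: (_ < _)%N; case: b => /=; rewrite ?mul0r ?mul1r ?normr0 ?normrN ?normr1 //.
Qed.

End Walk.
Arguments lv {R}.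
Arguments live {R}.
Arguments Sst {R}.
Arguments Tst {R}.
Arguments Fst {R}.
Arguments sg {R}.

Section Expect.
Variable R : realType.
Variable p : nat -> R.
Variable x : nat.
Hypothesis p01 : forall i, 0 <= p i <= 1.

Local Notation E := (Ex p).
Local Notation lvR := (@lv R x).
Definition Pk k := E k (lv x).

Lemma lv01 s : 0 <= lvR s <= 1.
Proof. by rewrite /lv; case: (_ < _)%N; rewrite /= ?lexx ?ler01. Qed.

Lemma lv2 s : lvR s * lvR s = lvR s.
Proof. by rewrite /lv; case: (_ < _)%N; rewrite /= ?mul0r ?mulr1. Qed.

Lemma Pk01 k : 0 <= Pk k <= 1.
Proof.
apply/andP; split.
  by rewrite -(Ex_cst p k 0) /Pk; apply: Ex_le => // s _; case/andP: (lv01 s).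
by rewrite -(Ex_cst p k 1) /Pk; apply: Ex_le => // s _; case/andP: (lv01 s).
Qed.

Lemma ET n : E n (Tst x) = \sum_(k < n) Pk k.
Proof.
elim: n => [|n IH]; first by rewrite big_ord0 /= /Tst big_ord0.
rewrite (@Ex_rcons _ _ n _ (fun s _ => lvR s)); last by move=> s b _; rewrite Tst_rcons.
rewrite IH big_ord_recr /=; congr (_ + _); rewrite /Pk.
by apply: Ex_ext => s _; ring.
Qed.

Lemma EA n : E n (Ast p x) = 0.
Proof.
elim: n => [|n IH]; first by rewrite /= /Ast big_ord0.
rewrite (@Ex_rcons _ _ n _ (fun s b => lvR s * (sg b - dd p n))); last first.
  by move=> s b hs; rewrite Ast_rcons hs.
rewrite IH add0r -(Ex_cst p n 0); apply: Ex_ext => s _; rewrite /sg /dd; ring.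
Qed.

Lemma ED n : E n (Dst p x) = \sum_(k < n) dd p k * Pk k.
Proof.
elim: n => [|n IH]; first by rewrite big_ord0 /= /Dst big_ord0.
rewrite (@Ex_rcons _ _ n _ (fun s _ => lvR s * dd p n)); last first.
  by move=> s b hs; rewrite Dst_rcons hs.
rewrite IH big_ord_recr /=; congr (_ + _); rewrite /Pk -ExZ.
by apply: Ex_ext => s _; ring.
Qed.

Lemma EA2 n : E n (fun s => Ast p x s ^+ 2) = \sum_(k < n) (1 - dd p k ^+ 2) * Pk k.
Proof.
elim: n => [|n IH]; first by rewrite big_ord0 /= /Ast big_ord0 expr0n.
rewrite (@Ex_rcons _ _ n _ (fun s b => 2 * Ast p x s * lvR s * (sg b - dd p n)
   + lvR s * (sg b - dd p n) ^+ 2)); last first.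
  move=> s b hs; rewrite Ast_rcons hs.
  have := lv2 s; set l := lvR s => hl.
  by rewrite !expr2 -{4}hl; ring.
rewrite IH big_ord_recr /=; congr (_ + _); rewrite /Pk -ExZ.
by apply: Ex_ext => s _; rewrite /sg /dd; ring.
Qed.

Lemma Etail n : E n (fun s => (2^-1) ^+ nf s) = \prod_(k < n) (p k + (1 - p k) / 2).
Proof.
elim: n => [|n IH]; first by rewrite big_ord0 /= /nf /nfi /= big_ord0 expr0.
rewrite (@Ex_rconsM _ _ n _ (fun b : bool => if b then 1 else 2^-1)); last first.
  by move=> s b _; rewrite nf_rcons exprD; case: b.
by rewrite IH big_ord_recr /= mulr1.
Qed.

End Expect.

Lemma sq_up (R : realFieldType) (A D y : R) : 0 < y ->
  (A + D) ^+ 2 <= (1 + y^-1) * A ^+ 2 + (1 + y) * D ^+ 2.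
Proof.
move=> y0; rewrite -subr_ge0.
have -> : (1 + y^-1) * A ^+ 2 + (1 + y) * D ^+ 2 - (A + D) ^+ 2 = (A - y * D) ^+ 2 / y.
  by field; rewrite gt_eqF.
by rewrite divr_ge0 ?sqr_ge0 // ltW.
Qed.

Lemma sq_lo (R : realFieldType) (A D y : R) : 0 < y ->
  (1 - y^-1) * A ^+ 2 - y * D ^+ 2 <= (A + D) ^+ 2.
Proof.
move=> y0; rewrite -subr_ge0.
have -> : (A + D) ^+ 2 - ((1 - y^-1) * A ^+ 2 - y * D ^+ 2) = (A + y * D) ^+ 2 / y + D ^+ 2.
  by field; rewrite gt_eqF.
by rewrite addr_ge0 ?sqr_ge0 // divr_ge0 ?sqr_ge0 // ltW.
Qed.

Section Bounds.
Variable R : realType.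
Variable p : nat -> R.
Variable x : nat.
Hypothesis hp : forall i, 1 / 2 <= p i < 1.

Lemma p01 i : 0 <= p i <= 1.
Proof. by have /andP[h1 h2] := hp i; apply/andP; split; lra. Qed.

Lemma dd01 i : 0 <= dd p i <= 1.
Proof. by have /andP[h1 h2] := hp i; rewrite /dd; apply/andP; split; lra. Qed.

Local Notation E := (Ex p).
Local Notation lvR := (@lv R x).
Local Notation SstR := (@Sst R x).
Local Notation TstR := (@Tst R x).
Local Notation FstR := (@Fst R x).

Definition hh n : R := ((n.+1 - 2 * x) * (n.+1 - 2 * x))%N%:R.
Definition G n s : R := if (x <= nf s)%N then SstR s ^+ 2 else hh n.

Lemma Ele n f g : (forall s, size s = n -> f s <= g s) -> E n f <= E n g.
Proof. by move=> H; apply: (Ex_le p01 H). Qed.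

Lemma Dst_bnd s : 0 <= Dst p x s <= \sum_(k < size s) dd p k.
Proof.
apply/andP; split.
  apply: sumr_ge0 => i _; apply: mulr_ge0; first by rewrite /live ler0n.
  by case/andP: (dd01 i).
apply: ler_sum => i _; case/andP: (dd01 i) => h0 h1.
by rewrite /live; case: (_ < _)%N; rewrite /= ?mul0r ?mul1r.
Qed.

Lemma Fst_bnd s : (x%:R * (1 - lvR s) <= FstR s) /\ (FstR s <= x%:R).
Proof.
rewrite Fst_min /lv; split.
  case: ltnP => h /=; first by rewrite subrr mulr0.
  by rewrite subr0 mulr1 ler_nat; apply/eqP; lia.
by rewrite ler_nat; apply/eqP; lia.
Qed.


Lemma tn_eq n : E n (TstR) = E n (Dst p x) + 2 * E n (FstR).
Proof.
have -> : E n (TstR) = E n (fun s => Ast p x s + (Dst p x s + 2 * FstR s)).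
  by apply: Ex_ext => s _; rewrite TSF (SAD p) addrA.
by rewrite ExD EA add0r ExD ExZ.
Qed.

Lemma ED_bnd n Delta : \sum_(k < n) dd p k <= Delta ->
  0 <= E n (Dst p x) <= Delta.
Proof.
move=> hD; rewrite ED; apply/andP; split.
  apply: sumr_ge0 => i _; apply: mulr_ge0; first by case/andP: (dd01 i).
  by case/andP: (Pk01 x p01 i).
apply: le_trans hD; apply: ler_sum => i _.
case/andP: (dd01 i) => h0 h1; case/andP: (Pk01 x p01 i) => h2 h3.
by rewrite ler_piMr.
Qed.

Lemma EA2_bnd n Delta : \sum_(k < n) dd p k <= Delta ->
  E n (TstR) - Delta <= E n (fun s => Ast p x s ^+ 2) <= E n (TstR).
Proof.
move=> hD; rewrite EA2 ET; apply/andP; split.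
  rewrite lerBlDr; apply: (le_trans _ (lerD (lexx _) hD)).
  rewrite -big_split /=; apply: ler_sum => i _.
  case/andP: (dd01 i) => h0 h1; case/andP: (Pk01 x p01 i) => h2 h3.
  by nra.
apply: ler_sum => i _.
case/andP: (dd01 i) => h0 h1; case/andP: (Pk01 x p01 i) => h2 h3.
by nra.
Qed.

Lemma ED2_bnd n Delta : \sum_(k < n) dd p k <= Delta ->
  E n (fun s => Dst p x s ^+ 2) <= Delta ^+ 2.
Proof.
move=> hD; rewrite -[X in _ <= X](Ex_cst p n); apply: Ele => s hs.
case/andP: (Dst_bnd s); rewrite hs => h0 h1.
have h2 : Dst p x s <= Delta by apply: le_trans hD.
by nra.
Qed.

Lemma Esq_up n y Delta : 0 < y -> \sum_(k < n) dd p k <= Delta ->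
  E n (fun s => SstR s ^+ 2) <= (1 + y^-1) * (2 * x%:R + Delta) + (1 + y) * Delta ^+ 2.
Proof.
move=> y0 hD.
apply: (le_trans (Ele (g := fun s => (1 + y^-1) * Ast p x s ^+ 2 + (1 + y) * Dst p x s ^+ 2) _)).
  by move=> s _; rewrite (SAD p); apply: sq_up.
rewrite ExD !ExZ; apply: lerD.
  apply: ler_wpM2l; first by rewrite addr_ge0 // invr_ge0 ltW.
  case/andP: (EA2_bnd hD) => _ h; apply: le_trans h _.
  rewrite tn_eq; case/andP: (ED_bnd hD) => _ h1.
  have h2 : E n (FstR) <= x%:R.
    by rewrite -[X in _ <= X](Ex_cst p n); apply: Ele => s _; case: (Fst_bnd s).
  lra.
apply: ler_wpM2l; first by rewrite addr_ge0 // ltW.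
exact: ED2_bnd.
Qed.

Lemma Esq_lo n y Delta : 1 <= y -> \sum_(k < n) dd p k <= Delta ->
  (1 - y^-1) * (2 * x%:R * (1 - Pk p x n) - Delta) - y * Delta ^+ 2
  <= E n (fun s => SstR s ^+ 2).
Proof.
move=> y1 hD; have y0 : 0 < y by lra.
apply: (le_trans _ (Ele (f := fun s => (1 - y^-1) * Ast p x s ^+ 2 - y * Dst p x s ^+ 2) _)); last first.
  by move=> s _; rewrite (SAD p); apply: sq_lo.
rewrite ExB !ExZ; apply: lerB; last by apply: ler_wpM2l; [lra | exact: ED2_bnd].
apply: ler_wpM2l; first by rewrite subr_ge0 invr_le1 // ?unitfE ?gt_eqF.
case/andP: (EA2_bnd hD) => h _; apply: le_trans h.
rewrite lerD2r tn_eq; case/andP: (ED_bnd hD) => h1 _.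
have h2 : x%:R * (1 - Pk p x n) <= E n (FstR).
  rewrite /Pk -[X in X - _](Ex_cst p n 1) -ExB -ExZ.
  by apply: Ele => s _; case: (Fst_bnd s).
lra.
Qed.

Lemma EG_up n y Delta : 0 < y -> \sum_(k < n) dd p k <= Delta ->
  E n (G n) <= (1 + y^-1) * (2 * x%:R + Delta) + (1 + y) * Delta ^+ 2
               + (n.+1)%:R ^+ 2 * Pk p x n.
Proof.
move=> y0 hD.
apply: (le_trans (Ele (g := fun s => SstR s ^+ 2 + (n.+1)%:R ^+ 2 * lvR s) _)).
  move=> s _; rewrite /G /lv; case: leqP => h.
    by rewrite mulr0 addr0.
  rewrite mulr1; apply: (le_trans _ (lerD (sqr_ge0 _) (lexx _))).
  by rewrite add0r /hh -natrX ler_nat; apply/eqP; nia.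
by rewrite ExD ExZ lerD2r; apply: Esq_up.
Qed.

Lemma EG_lo n y Delta : 1 <= y -> \sum_(k < n) dd p k <= Delta ->
  (1 - y^-1) * (2 * x%:R * (1 - Pk p x n) - Delta) - y * Delta ^+ 2
   - n%:R ^+ 2 * Pk p x n <= E n (G n).
Proof.
move=> y1 hD.
apply: (le_trans _ (Ele (f := fun s => SstR s ^+ 2 - n%:R ^+ 2 * lvR s) _)).
  by rewrite ExB ExZ lerD2r; apply: Esq_lo.
move=> s hs; rewrite /G /lv; case: leqP => h.
  by rewrite mulr0 subr0.
rewrite mulr1.
have := @Sst_abs R x s; rewrite hs ler_norml => /andP[h1 h2].
have h3 : 0 <= hh n by rewrite /hh ler0n.
nra.
Qed.

End Bounds.

Section Tail.
Variable R : realType.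
Variable p : nat -> R.
Variable x : nat.
Hypothesis hp : forall i, 1 / 2 <= p i < 1.
Local Notation E := (Ex p).

Lemma tail1 n : Pk p x n <= 2 ^+ x * \prod_(k < n) (p k + (1 - p k) / 2).
Proof.
rewrite -Etail /Pk -ExZ; apply: (Ele hp) => s _; rewrite /lv; case: ltnP => h.
  rewrite exprVn ler_pdivlMr ?exprn_gt0 // mul1r.
  by rewrite (ler_eXn2l (_ : 1 < 2)) ?ltr1n // ltnW.
by rewrite /= mulr_ge0 // exprn_ge0 // invr_ge0.
Qed.

Lemma tail2 n : \prod_(k < n) (p k + (1 - p k) / 2)
   <= expR ((\sum_(k < n) dd p k - n%:R) / 4).
Proof.
elim: n => [|n IH]; first by rewrite !big_ord0 subrr mul0r expR0.
rewrite !big_ord_recr /=.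
have -> : (\sum_(i < n) dd p i + dd p n - n.+1%:R) / 4 =
   (\sum_(i < n) dd p i - n%:R) / 4 + (1 + (- (1 - p n) / 2) - 1).
  by rewrite -addn1 natrD /dd; field.
rewrite expRD; have /andP[h1 h2] := hp n.
apply: ler_pM => //.
- by apply: prodr_ge0 => i _; have /andP[h3 h4] := hp i; lra.
- lra.
- apply: le_trans (expR_ge1Dx _); lra.
Qed.

Lemma tail3 n : (0 < n)%N -> (n.+1)%:R ^+ 2 / expR (n%:R / 4) <= 1536 / n%:R :> R.
Proof.
move=> n0; set m : R := n%:R.
have m1 : 1 <= m by rewrite /m ler1n.
have hE := @expR_ge1Dxn R (m / 4) 2.
have e6 : (3`!)%:R = 6 :> R by [].
rewrite e6 in hE.
rewrite ler_pdivrMr ?expR_gt0 //.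
have h : m ^+ 3 / 384 <= expR (m / 4).
  apply: le_trans (hE _); last by lra.
  have -> : (m / 4) ^+ 3 / 6 = m ^+ 3 / 384 by field.
  lra.
have -> : n.+1%:R = m + 1 by rewrite /m -addn1 natrD.
apply: le_trans (ler_wpM2l _ h); last by apply: divr_ge0; [exact: ler0n | exact: le_trans ler01 m1].
have -> : 1536 / m * (m ^+ 3 / 384) = 4 * m ^+ 2 by field; rewrite gt_eqF // (lt_le_trans ltr01 m1).
nra.
Qed.

Lemma tailK n Delta : (0 < n)%N -> \sum_(k < n) dd p k <= Delta ->
  (n.+1)%:R ^+ 2 * Pk p x n <= 2 ^+ x * expR (Delta / 4) * 1536 / n%:R.
Proof.
move=> n0 hD.
have h1 := tail1 n; have h2 := tail2 n; have h3 := tail3 n0.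
have h4 : expR ((\sum_(k < n) dd p k - n%:R) / 4) <= expR (Delta / 4) / expR (n%:R / 4).
  by rewrite -expRB ler_expR; lra.
have h5 : Pk p x n <= 2 ^+ x * (expR (Delta / 4) / expR (n%:R / 4)).
  apply: le_trans h1 _; apply: ler_wpM2l; first by rewrite exprn_ge0.
  exact: le_trans h2 h4.
have h6 : 0 <= (n.+1)%:R ^+ 2 :> R by rewrite exprn_ge0.
apply: le_trans (ler_wpM2l h6 h5) _.
have -> : 2 ^+ x * expR (Delta / 4) * 1536 / n%:R =
   2 ^+ x * expR (Delta / 4) * (1536 / n%:R) by rewrite mulrA.
have -> : n.+1%:R ^+ 2 * (2 ^+ x * (expR (Delta / 4) / expR (n%:R / 4))) =
   2 ^+ x * expR (Delta / 4) * (n.+1%:R ^+ 2 / expR (n%:R / 4)) by rewrite !mulrA; ring.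
by apply: ler_wpM2l => //; rewrite mulr_ge0 ?exprn_ge0 ?expR_ge0.
Qed.

End Tail.

Fixpoint LL (n : nat) : seq (seq bool) :=
  if n is n'.+1 then [seq rcons s b | s <- LL n', b <- [:: true; false]] else [:: [::]].

Lemma mem_LL n s : (s \in LL n) = (size s == n).
Proof.
elim: n s => [|n IH] s.
  by rewrite /= inE size_eq0.
apply/idP/idP.
  case/allpairsP => -[t b] [/= ht _ ->].
  by rewrite size_rcons eqSS -IH.
elim/last_ind: s => [|t b _]; first by [].
rewrite size_rcons eqSS -IH => ht; apply/allpairsP; exists (t, b); split => //.
by case: b; rewrite !inE eqxx ?orbT.
Qed.

Lemma uniq_LL n : uniq (LL n).
Proof.
elim: n => [|n IH] //; apply: allpairs_uniq => //.
by move=> [t1 b1] [t2 b2] _ _ /= /rcons_inj.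
Qed.

Section W.
Variable R : realType.
Variable p : nat -> R.

Definition qq i (b : bool) : R := if b then p i else 1 - p i.
Definition WW (s : seq bool) : R := \prod_(i < size s) qq i (nth true s i).

Lemma WW_rcons s b : WW (rcons s b) = WW s * qq (size s) b.
Proof.
rewrite /WW size_rcons big_ord_recr /= nth_rcons ltnn eqxx; congr (_ * _).
by apply: eq_bigr => i _; rewrite nth_rcons ltn_ord.
Qed.

Lemma Ex_sum n f : Ex p n f = \sum_(s <- LL n) WW s * f s.
Proof.
elim: n f => [|n IH] f; first by rewrite /= big_seq1 /WW big_ord0 mul1r.
rewrite [Ex _ _ _]/= IH big_allpairs_dep /=; apply: eq_big_seq => s.
rewrite mem_LL => /eqP hs.
by rewrite !big_cons big_nil !WW_rcons hs /qq addr0; ring.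
Qed.
End W.

Section Bridge.
Context (d : measure_display) (T : measurableType d) (R : realType).
Variables (P : probability T R) (p : nat -> R) (B : nat -> T -> bool).
Hypothesis hB : cookie_process P p B.

Definition pre n w : seq bool := mkseq (fun i => B i w) n.

Definition AA (s : seq bool) : set T :=
  \bigcap_(i in [set` iota 0 (size s)]) [set w | B i w = nth true s i].

Lemma mBc i c : measurable [set w | B i w = c].
Proof.
case: hB => hm _; case: c; first exact: hm.
have -> : [set w | B i w = false] = ~` [set w | B i w].
  by apply/seteqP; split => w /=; case: (B i w).
exact: measurableC.
Qed.

Lemma mAA s : measurable (AA s).
Proof.
apply: fin_bigcap_measurable; first exact: finite_seq.
by move=> i _; apply: mBc.
Qed.

Lemma inAA s w : AA s w <-> pre (size s) w = s.
Proof.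
split.
  move=> h; apply: (@eq_from_nth _ true); first by rewrite size_mkseq.
  move=> i; rewrite size_mkseq => hi; rewrite nth_mkseq //.
  by apply: h => /=; rewrite mem_iota.
move=> <- i /=; rewrite mem_iota size_mkseq add0n => hi.
by rewrite nth_mkseq.
Qed.

Lemma Pbc i c : P [set w | B i w = c] = (qq p i c)%:E.
Proof.
case: hB => hm [hp _]; case: c; first exact: hp.
have -> : [set w | B i w = false] = ~` [set w | B i w].
  by apply/seteqP; split => w /=; case: (B i w).
by rewrite probability_setC // hp.
Qed.

Lemma PAA s : P (AA s) = (WW p s)%:E.
Proof.
case: hB => _ [_ hind].
rewrite /AA hind ?iota_uniq //.
under eq_bigr do rewrite Pbc.
rewrite prodEFin /WW; congr (_%:E).
have -> : iota 0 (size s) = index_iota 0 (size s) by rewrite /index_iota subn0.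
by rewrite big_mkord.
Qed.

Lemma pre_LL n w : pre n w \in LL n.
Proof. by rewrite mem_LL size_mkseq. Qed.

Lemma sum_indic n (f : seq bool -> R) w :
  \sum_(s <- LL n) f s * \1_(AA s) w = f (pre n w).
Proof.
rewrite (bigD1_seq (pre n w)) ?pre_LL ?uniq_LL //=.
rewrite big_seq_cond big1 ?addr0.
  rewrite indicE mem_set ?mulr1 //; apply/inAA; by rewrite size_mkseq.
move=> s /andP[hs hne]; rewrite indicE memNset ?mulr0 //.
move/inAA; move: hs; rewrite mem_LL => /eqP -> h.
by move: hne; rewrite h eqxx.
Qed.

Lemma int_pre n (f : seq bool -> R) : (forall s, 0 <= f s) ->
  measurable_fun [set: T] (fun w : T => ((f (pre n w))%:E : \bar R)) /\
  (\int[P]_w (f (pre n w))%:E = (Ex p n f)%:E)%E.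
Proof.
move=> f0.
have eqf : (fun w => (f (pre n w))%:E) =
    (fun w => \sum_(s <- LL n) ((f s)%:E * (\1_(AA s) w)%:E))%E.
  apply/funext => w; rewrite -sum_indic -sumEFin; apply: eq_bigr => s _.
  by rewrite EFinM.
have mi s : measurable_fun setT (fun w => ((f s)%:E * (\1_(AA s) w)%:E)%E).
  apply: measurable_funeM; apply/measurable_EFinP.
  exact: measurable_indic (mAA s).
split; rewrite eqf; first exact: emeasurable_sum.
rewrite ge0_integral_sum //; last first.
  by move=> s w _; rewrite mule_ge0 // lee_fin // indicE ler0n.
rewrite Ex_sum -sumEFin; apply: eq_bigr => s _.
have mind : measurable_fun setT (fun w => ((\1_(AA s) w)%:E : \bar R)).
  by apply/measurable_EFinP; exact: measurable_indic (mAA s).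
have ind0 : forall w, setT w -> (0 <= ((\1_(AA s) w)%:E : \bar R))%E.
  by move=> w _; rewrite lee_fin indicE ler0n.
rewrite ge0_integralZl // ?lee_fin //.
rewrite integral_indic ?mAA //.
rewrite (_ : AA s `&` setT = AA s); last by apply/seteqP; split => w //= [].
have h := PAA s.
transitivity ((f s)%:E * (WW p s)%:E)%E; last by rewrite -EFinM mulrC.
by congr (_ * _)%E; exact: h.
exact: mAA.
Qed.

End Bridge.

Section Link.
Variable R : realType.
Variable x : nat.
Variable b : nat -> bool.

Lemma nfailS k : nfail b k.+1 = (nfail b k + ~~ b k)%N.
Proof. by rewrite /nfail big_ord_recr. Qed.

Lemma nfail_mono k m : (k <= m)%N -> (nfail b k <= nfail b m)%N.
Proof.
elim: m => [|m IH]; first by rewrite leqn0 => /eqP ->.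
rewrite leq_eqVlt => /orP[/eqP -> //|]; rewrite ltnS => /IH h.
by rewrite nfailS; apply: leq_trans h _; apply: leq_addr.
Qed.

Lemma nfail_le k : (nfail b k <= k)%N.
Proof.
elim: k => [|k IH]; first by rewrite /nfail big_ord0.
by rewrite nfailS; case: (b k) => /=; lia.
Qed.

Lemma nfail_below t : (forall k, (k < t)%N -> nfail b k != x) ->
  forall k, (k <= t)%N -> (nfail b k <= x)%N.
Proof.
move=> H; elim => [|k IH] hk; first by rewrite /nfail big_ord0.
have h1 := IH (ltnW hk); have h2 := H k hk.
rewrite nfailS; case: (b k) => /=; lia.
Qed.

Lemma nfi_mk n i : (i <= n)%N -> nfi (mkseq b n) i = nfail b i.
Proof.
move=> hi; apply: eq_bigr => j _; rewrite nth_mkseq //.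
exact: leq_trans (ltn_ord j) hi.
Qed.

Lemma nf_mk n : nf (mkseq b n) = nfail b n.
Proof. by rewrite /nf size_mkseq nfi_mk. Qed.

Lemma Tst_mk n : Tst x (mkseq b n) = \sum_(i < n) ((nfail b i < x)%N)%:R :> R.
Proof.
rewrite /Tst size_mkseq; apply: eq_bigr => i _.
by rewrite /live nfi_mk // ltnW.
Qed.

Lemma sum_lt n t : \sum_(i < n) ((i < t)%N)%:R = (minn t n)%:R :> R.
Proof.
elim: n => [|n IH]; first by rewrite big_ord0 minn0.
rewrite big_ord_recr /= IH -natrD; congr (_%:R).
case: ltnP => h /=; lia.
Qed.

Lemma Sst_eq s : Sst x s = Tst x s - 2 * Fst x s :> R.
Proof. by rewrite TSF; ring. Qed.

Lemma G_case1 t n : nfail b t = x -> (forall k, (k < t)%N -> nfail b k != x) ->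
  (t <= n)%N -> G R x n (mkseq b n) = (t%:R - 2 * x%:R) ^+ 2 :> R.
Proof.
move=> ht hmin htn.
have hnf : (x <= nf (mkseq b n))%N by rewrite nf_mk -ht nfail_mono.
rewrite /G hnf Sst_eq Fst_min Tst_mk.
have -> : minn (nf (mkseq b n)) x = x by lia.
have -> : \sum_(i < n) ((nfail b i < x)%N)%:R = \sum_(i < n) ((i < t)%N)%:R :> R.
  apply: eq_bigr => i _; congr (_%:R).
  case: (ltnP i t) => hit.
    have := nfail_below hmin (ltnW hit); have := hmin _ hit; lia.
  have := nfail_mono hit; lia.
by rewrite sum_lt (_ : minn t n = t) //; lia.
Qed.

Lemma G_case2 n : (forall k, nfail b k != x) -> G R x n (mkseq b n) = hh R x n :> R.
Proof.
move=> H; rewrite /G nf_mk.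
have : (nfail b n <= x)%N by apply: (nfail_below (t := n.+1)) => // k _; apply: H.
move=> h1; have h2 := H n.
by rewrite leqNgt (_ : (nfail b n < x)%N) //; lia.
Qed.

Lemma G_ge0 n s : 0 <= G R x n s :> R.
Proof. by rewrite /G; case: ifP => _; rewrite ?sqr_ge0 // /hh ler0n. Qed.

Lemma G_mono n : G R x n (mkseq b n) <= G R x n.+1 (mkseq b n.+1) :> R.
Proof.
rewrite mkseqS; set s := mkseq b n.
rewrite /G nf_rcons.
case: (leqP x (nf s)) => h1.
  rewrite (leq_trans h1 (leq_addr _ _)) Sst_rcons /lv ltnNge h1 /= mul0r addr0.
  by [].
case: leqP => h2; last by rewrite /hh ler_nat; nia.
(* the walk just stopped at time n+1 *)
have hall : forall i, (i < n.+1)%N -> (nfail b i < x)%N.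
  move=> i hi; have := nfail_mono (ltnSE hi); rewrite -(nf_mk n) -/s; lia.
rewrite -/(mkseq b n.+1) -mkseqS Sst_eq Fst_min Tst_mk nf_mk.
have -> : \sum_(i < n.+1) ((nfail b i < x)%N)%:R = \sum_(i < n.+1) 1 :> R.
  by apply: eq_bigr => i _; rewrite hall.
rewrite sumr_const card_ord.
have -> : minn (nfail b n.+1) x = x by rewrite nfailS -nf_mk -/s; lia.
rewrite /hh.
case: (leqP (2 * x) n.+1) => h3.
  rewrite natrM natrB // natrM.
  by rewrite expr2.
rewrite (_ : (n.+1 - 2 * x)%N = 0%N); last by lia.
by rewrite mul0n sqr_ge0.
Qed.

End Link.

Lemma sqdev_lim (R : realType) (x : nat) (b : nat -> bool) :
  (fun n => (G R x n (mkseq b n))%:E) @ \oo --> sqdev b x.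
Proof.
rewrite /sqdev /Uval; case: pselect => [H|H].
  case: ex_minnP => t /eqP ht hmin.
  have hmin' : forall k, (k < t)%N -> nfail b k != x.
    move=> k hk; apply/negP => /hmin; lia.
  have hxt : (x <= t)%N by rewrite -{1}ht nfail_le.
  apply: cvg_near_cst; exists t => // n /= htn.
  rewrite (G_case1 _ ht hmin' htn); congr (_%:E).
  by rewrite natrB // -mulr_natl; ring.
have H' : forall k, nfail b k != x by move=> k; apply/negP => hk; apply: H; exists k.
under eq_fun do rewrite (G_case2 _ _ H').
apply/cvgeryP/cvgryPge => A.
exists (Num.bound `|A| + 2 * x)%N => // n /= hn.
apply: (le_trans (ler_norm A)); apply: ltW; apply: (lt_le_trans (archi_boundP (normr_ge0 A))).
rewrite /hh ler_nat.
have hn' : (Num.bound `|A| + 2 * x <= n)%N := hn.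
have h : (Num.bound `|A| < n.+1 - 2 * x)%N by lia.
apply: leq_trans (ltnW h) _; apply: leq_pmulr; lia.
Qed.

Lemma eps_le (R : realType) (a b c : R) (n : nat) :
  (forall m, (0 < m)%N -> (n <= m)%N -> a <= b + c / m%:R) -> a <= b.
Proof.
move=> H; rewrite leNgt; apply/negP => hba.
set e := a - b; have e0 : 0 < e by rewrite subr_gt0.
set m := (Num.bound (`|c| / e) + n).+1.
have m0 : (0 < m)%N by [].
have hm : `|c| / e < m%:R.
  apply: (lt_le_trans (archi_boundP _)); first by rewrite divr_ge0 // ltW.
  by rewrite ler_nat /m; lia.
have hm0 : (0 : R) < m%:R by rewrite ltr0n.
have hnm : (n <= m)%N by rewrite /m; lia.
have := H m m0 hnm.
have : c / m%:R < e.
  apply: (le_lt_trans (ler_norm _)).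
  rewrite normrM normfV (ger0_norm (ltW hm0)) ltr_pdivrMr //.
  by rewrite -ltr_pdivrMl // mulrC.
rewrite /e; lra.
Qed.

Section Main.
Context (d : measure_display) (T : measurableType d) (R : realType).
Variables (P : probability T R) (p : nat -> R) (B : nat -> T -> bool).
Hypothesis hB : cookie_process P p B.
Hypothesis hp : forall i, 1 / 2 <= p i < 1.
Variable x : nat.

Let gg n w := ((G R x n (pre B n w))%:E : \bar R).

Let gg_meas n : measurable_fun setT (gg n).
Proof. exact: (int_pre hB n (@G_ge0 R x n)).1. Qed.

Let gg_int n : (\int[P]_w gg n w = (Ex p n (G R x n))%:E)%E.
Proof. exact: (int_pre hB n (@G_ge0 R x n)).2. Qed.

Let gg_mono w : {homo gg^~ w : n m / (n <= m)%N >-> (n <= m)%E}.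
Proof. by apply/nondecreasing_seqP => n; rewrite lee_fin; apply: G_mono. Qed.

Lemma int_cvg : (fun n => (Ex p n (G R x n))%:E) @ \oo -->
   (\int[P]_w sqdev (fun i => B i w) x)%E.
Proof.
have g0 : forall n w, setT w -> (0 <= gg n w)%E.
  by move=> n w _; rewrite /gg lee_fin G_ge0.
have := cvg_monotone_convergence (mu := P) measurableT gg_meas g0 (fun w _ => gg_mono w).
rewrite (eq_integral (fun w => sqdev (fun i => B i w) x)); last first.
  move=> w _; apply: cvg_lim => //; exact: sqdev_lim.
by under eq_fun do rewrite gg_int.
Qed.

Lemma u_mono n m : (n <= m)%N -> Ex p n (G R x n) <= Ex p m (G R x m).
Proof.
move=> nm; rewrite -lee_fin -!gg_int; apply: ge0_le_integral => //.
- by move=> w _; rewrite lee_fin G_ge0.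
- by move=> w _; apply: gg_mono.
Qed.

End Main.

Section Final.
Context (d : measure_display) (T : measurableType d) (R : realType).
Variables (P : probability T R) (p : nat -> R) (B : nat -> T -> bool).
Hypothesis hB : cookie_process P p B.
Hypothesis hp : forall i, 1 / 2 <= p i < 1.
Variable Delta : R.
Hypothesis hD : forall n, \sum_(k < n) dd p k <= Delta.
Variable x : nat.
Hypothesis x0 : (0 < x)%N.

Let u n := Ex p n (G R x n).
Let y := Num.sqrt (x%:R : R).
Let K := 2 ^+ x * expR (Delta / 4) * 1536 : R.
Let U0 := (1 + y^-1) * (2 * x%:R + Delta) + (1 + y) * Delta ^+ 2.
Let Lo0 := (1 - y^-1) * (2 * x%:R - Delta) - y * Delta ^+ 2.

Let y1 : 1 <= y.
Proof. by rewrite /y -[X in X <= _]sqrtr1 ler_sqrt // ler1n. Qed.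

Let K0 : 0 <= K.
Proof.
apply: mulr_ge0; last exact: ler0n.
apply: mulr_ge0; [exact: exprn_ge0 | exact: expR_ge0].
Qed.

Lemma u_up n : u n <= U0.
Proof.
apply: (@eps_le _ _ _ K n) => m m0 nm.
apply: le_trans (u_mono hB x nm) _.
have y0 : 0 < y := lt_le_trans ltr01 y1.
have h1 := EG_up x hp (n := m) y0 (hD m).
have h2 := tailK x hp m0 (hD m).
rewrite /K.
apply: le_trans h1 _; rewrite /U0; lra.
Qed.

Lemma u_lo n : (0 < n)%N -> Lo0 - (2 * x%:R + 1) * K / n%:R <= u n.
Proof.
move=> n0.
have h1 := EG_lo x hp (n := n) y1 (hD n).
have h2 := tailK x hp n0 (hD n).
apply: le_trans h1; rewrite /Lo0.
set Pn := Pk p x n; set z := y^-1.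
have y0 : 0 < y := lt_le_trans ltr01 y1.
have hz : 0 <= z <= 1.
  by apply/andP; split; [rewrite invr_ge0 ltW | rewrite invf_le1].
have hP : 0 <= Pn by case/andP: (Pk01 x (p01 hp) n).
have hn1 : 1 <= (n.+1)%:R ^+ 2 :> R by rewrite -natrX ler1n expn_gt0.
have hn2 : n%:R ^+ 2 <= (n.+1)%:R ^+ 2 :> R.
  by rewrite -!natrX ler_nat leq_exp2r // ltnW.
set Q := (n.+1)%:R ^+ 2 * Pn.
have hPQ : Pn <= Q by rewrite /Q -{1}[Pn]mul1r ler_wpM2r.
have hnQ : n%:R ^+ 2 * Pn <= Q by rewrite /Q ler_wpM2r.
have -> : (2 * x%:R + 1) * K / n%:R = 2 * x%:R * (K / n%:R) + K / n%:R.
  by rewrite -mulrA mulrDl mul1r.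
rewrite -/K -/Pn -/Q in h2.
have hx : (0 : R) <= x%:R by rewrite ler0n.
have hxz : (1 - z) * (2 * x%:R * Pn) <= 2 * x%:R * Q.
  have : 2 * x%:R * Pn <= 2 * x%:R * Q by rewrite ler_wpM2l // mulr_ge0.
  have : (1 - z) * (2 * x%:R * Pn) <= 2 * x%:R * Pn.
    case/andP: hz => hz0 hz1.
    by rewrite ler_piMl //; [rewrite !mulr_ge0 | rewrite lerBlDr lerDl].
  lra.
have hQK : 2 * x%:R * Q <= 2 * x%:R * (K / n%:R) by rewrite ler_wpM2l // mulr_ge0.
have -> : (1 - z) * (2 * x%:R * (1 - Pn) - Delta) =
   (1 - z) * (2 * x%:R - Delta) - (1 - z) * (2 * x%:R * Pn) by ring.
lra.
Qed.

Lemma int_bounds : exists r : R,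
  (\int[P]_w sqdev (fun i => B i w) x = r%:E)%E /\ Lo0 <= r <= U0.
Proof.
have hc := int_cvg (x := x) hB.
set I := (\int[P]_w _)%E in hc *.
have hI : I = lim ((fun n => (u n)%:E) @ \oo) by rewrite (cvg_lim _ hc).
have hup : (I <= U0%:E)%E.
  rewrite hI; apply: lime_le; first exact: (cvgP _ hc).
  by apply: nearW => n; rewrite lee_fin; exact: u_up.
have hlo : forall n, ((u n)%:E <= I)%E.
  move=> n; rewrite hI; apply: lime_ge; first exact: (cvgP _ hc).
  by exists n => // m /= hm; rewrite lee_fin /u; apply: (u_mono hB x hm).
have hu0 : 0 <= u 0 by rewrite /u /= G_ge0.
have I0 : (0 <= I)%E by apply: le_trans (hlo 0%N); rewrite lee_fin.
have hfin : I \is a fin_num.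
  by rewrite ge0_fin_numE // (le_lt_trans hup) // ltry.
exists (fine I); split; first by rewrite fineK.
apply/andP; split; last by rewrite -lee_fin fineK.
apply: (@eps_le _ _ _ ((2 * x%:R + 1) * K) 1%N) => m m0 _.
have := u_lo m0; have := hlo m; rewrite -{1}(fineK hfin) lee_fin.
rewrite mulrA; lra.
Qed.

End Final.

Lemma final_alg (R : realType) (D y r : R) : 0 <= D -> 1 <= y ->
  (1 - y^-1) * (2 * y ^+ 2 - D) - y * D ^+ 2 <= r ->
  r <= (1 + y^-1) * (2 * y ^+ 2 + D) + (1 + y) * D ^+ 2 ->
  `|r / y ^+ 2 - 2| <= (2 + 2 * D + 2 * D ^+ 2) / y.
Proof.
move=> D0 y1 hlo hup.
have y0 : 0 < y by lra.
have yn0 : y != 0 by rewrite gt_eqF.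
have e1 : (1 - y^-1) * (2 * y ^+ 2 - D) - y * D ^+ 2
   = 2 * y ^+ 2 - 2 * y - D + D / y - y * D ^+ 2 by field.
have e2 : (1 + y^-1) * (2 * y ^+ 2 + D) + (1 + y) * D ^+ 2
   = 2 * y ^+ 2 + 2 * y + D + D / y + D ^+ 2 + y * D ^+ 2 by field.
have e3 : y * (2 + 2 * D + 2 * D ^+ 2) = 2 * y + 2 * (y * D) + 2 * (y * D ^+ 2) by ring.
have h1 : 0 <= D / y by rewrite divr_ge0 // ltW.
have h2 : D / y <= D by rewrite ler_pdivrMr // ler_peMr.
have h3 : D <= y * D by rewrite ler_peMl.
have h4 : 0 <= D ^+ 2 by rewrite sqr_ge0.
have h5 : D ^+ 2 <= y * D ^+ 2 by rewrite ler_peMl.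
rewrite e1 in hlo; rewrite e2 in hup.
have hn : `|r - 2 * y ^+ 2| <= y * (2 + 2 * D + 2 * D ^+ 2).
  rewrite e3 ler_norml; apply/andP; split; lra.
have -> : r / y ^+ 2 - 2 = (r - 2 * y ^+ 2) / y ^+ 2 by field.
rewrite normrM normfV (ger0_norm (sqr_ge0 y)).
have -> : (2 + 2 * D + 2 * D ^+ 2) / y = y * (2 + 2 * D + 2 * D ^+ 2) / y ^+ 2 by field.
by rewrite ler_wpM2r // invr_ge0 sqr_ge0.
Qed.

Lemma key (R : realType) (p : nat -> R) (hp : forall i, 1 / 2 <= p i < 1)
  (Dl : R) (hD : forall n, \sum_(k < n) dd p k <= Dl) (D0 : 0 <= Dl)
  (d : measure_display) (T : measurableType d) (P : probability T R)
  (B : nat -> T -> bool) (hB : cookie_process P p B) (x : nat) (x0 : (0 < x)%N) :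
  exists v : R, nu P B x = v%:E /\
    `|v - 2| <= (2 + 2 * Dl + 2 * Dl ^+ 2) / Num.sqrt (x%:R).
Proof.
have [r [hI hr]] := int_bounds hB hp hD x0.
exists (x%:R^-1 * r); split; first by rewrite /nu hI.
set y := Num.sqrt (x%:R : R).
have hy : y ^+ 2 = x%:R by rewrite sqr_sqrtr // ler0n.
have y1 : 1 <= y by rewrite /y -[X in X <= _]sqrtr1 ler_sqrt // ler1n.
case/andP: hr => h1 h2.
rewrite mulrC -hy; apply: final_alg => //; rewrite hy //.
Qed.

Unset Implicit Arguments.
Theorem lemma4p2 (R : realType) (p : nat -> R)
  (hp : forall i, 1 / 2 <= p i < 1)
  (hdelta : (\sum_(0 <= i <oo) ((2 * p i - 1)%:E) < +oo)%E) :
  (forall (d : measure_display) (T : measurableType d)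
     (P : probability T R) (B : nat -> T -> bool),
     cookie_process P p B -> nu P B @ \oo --> 2%:E) /\
  exists (C : R) (N : nat),
    forall (d : measure_display) (T : measurableType d)
      (P : probability T R) (B : nat -> T -> bool),
      cookie_process P p B ->
      forall x : nat, (N <= x)%N ->
        (`| nu P B x - 2%:E | <= (C * ln (x%:R) ^+ 4 / Num.sqrt (x%:R))%:E)%E.
Proof.
set S := (\sum_(0 <= i <oo) _)%E in hdelta.
have hterm : forall i, (0 <= ((2 * p i - 1)%:E : \bar R))%E.
  by move=> i; rewrite lee_fin; have /andP[h1 h2] := hp i; lra.
have hpart : forall n, ((\sum_(k < n) dd p k)%:E <= S)%E.
  move=> n; rewrite -sumEFin.
  have := @nneseries_lim_ge R (fun i => ((2 * p i - 1)%:E)) xpredT 0%N n.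
  rewrite big_mkord; apply => k _ _; exact: hterm.
have S0 : (0 <= S)%E by have := hpart 0%N; rewrite big_ord0.
have Sfin : S \is a fin_num by rewrite ge0_fin_numE.
set Dl := fine S.
have hD : forall n, \sum_(k < n) dd p k <= Dl.
  by move=> n; rewrite -lee_fin /Dl fineK.
have D0 : 0 <= Dl by have := hD 0%N; rewrite big_ord0.
set cc := 2 + 2 * Dl + 2 * Dl ^+ 2.
have cc0 : 0 <= cc by rewrite /cc; have := sqr_ge0 Dl; lra.
split.
  move=> d T P B hB; apply/fine_cvgP; split.
    exists 1%N => // n /= hn.
    by have [v [-> _]] := key hp hD D0 hB hn.
  apply/cvgrPdist_le => e e0.
  exists (Num.bound ((cc / e) ^+ 2)).+1 => // n /= hn.
  have hn0 : (0 < n)%N by apply: leq_trans hn.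
  have [v [hv hb]] := key hp hD D0 hB hn0.
  rewrite /= hv /= distrC; apply: le_trans hb _.
  have sq0 : 0 < Num.sqrt (n%:R : R) by rewrite sqrtr_gt0 ltr0n.
  rewrite ler_pdivrMr // -ler_pdivrMl //.
  have : (cc / e) ^+ 2 <= n%:R.
    apply: ltW; apply: (lt_le_trans (archi_boundP _)); first exact: sqr_ge0.
    by rewrite ler_nat; apply: ltnW.
  rewrite -ler_sqrt ?ler0n // sqrtr_sqr => h.
  by rewrite mulrC; apply: le_trans h; apply: ler_norm.
exists cc, (Num.bound (expR (1 : R))).
move=> d T P B hB x hx.
have e0 : 0 < expR (1 : R) by apply: expR_gt0.
have hxe : expR (1 : R) < x%:R :> R.
  have hb0 := archi_boundP (ltW e0).
  have hb1 : (Num.bound (expR (1 : R)))%:R <= x%:R :> R by rewrite ler_nat.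
  exact: lt_le_trans hb0 hb1.
have hx0 : (0 < x)%N by rewrite -(ltr0n R); apply: lt_trans hxe.
have [v [hv hb]] := key hp hD D0 hB hx0.
rewrite hv -EFinB abse_EFin lee_fin; apply: le_trans hb _.
have hl : 1 <= ln (x%:R : R).
  rewrite -[X in X <= _](expRK 1) ler_ln //; first exact: ltW.
  by rewrite posrE (lt_trans e0 hxe).
have hl4 : 1 <= ln (x%:R : R) ^+ 4 by rewrite exprn_ege1.
have sq0 : 0 <= (Num.sqrt (x%:R : R))^-1 by rewrite invr_ge0 sqrtr_ge0.
by rewrite ler_wpM2r // ler_peMr.
Qed.
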